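(* For every graph $G$ and every tree $F$, $\chi_c^{\bullet}(G\,\square\, F)\leq \chi_c^{\bullet}(G)+1$, where $\square$ denotes the Cartesian product of graphs.
   Context: All graphs are finite and simple. A correspondence-cover of a graph $G$ is a pair $(L,H)$ where $H$ is a graph and $L$ maps each $v\in V(G)$ to a subset $L(v)\subseteq V(H)$ such that: the sets $L(v)$ partition $V(H)$; each $L(v)$ induces a clique in $H$; if $uv\notin E(G)$ there are no edges of $H$ between $L(u)$ and $L(v)$; if $uv\in E(G)$ the edges of $H$ between $L(u)$ and $L(v)$ form a matching. The cover is $k$-fold if $|L(v)|=k$ for all $v$. An independent transversal is an independent set of $H$ containing exactly one vertex of each $L(v)$. A cover has a fractional packing if there is a probability distribution on independent transversals $I$ with $\Pr(x\in I)=1/|L(v)|$ for all $v$ and $x\in L(v)$. $\chi_c^{\bullet}(G)$ is the least $k\ge1$ such that every $k$-fold correspondence-cover of $G$ has a fractional packing. *)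

(* Defs.v *)
From HB Require Import structures.
From mathcomp Require Import all_boot all_order all_algebra.
From Stdlib Require Reals.
From mathcomp Require Import Rstruct.
Set Implicit Arguments. Unset Strict Implicit. Unset Printing Implicit Defensive.
Import Order.TTheory GRing.Theory Num.Theory.
Local Open Scope ring_scope.

Definition simple_graph (V : finType) (e : rel V) : Prop :=
  symmetric e /\ irreflexive e.

Definition cart_prod (V W : finType) (e : rel V) (f : rel W) : rel (V * W) :=
  fun p q => ((p.1 == q.1) && f p.2 q.2) || ((p.2 == q.2) && e p.1 q.1).

Definition connected_graph (W : finType) (f : rel W) : Prop :=
  forall x y : W, connect f x y.
Definition acyclic_graph (W : finType) (f : rel W) : Prop :=
  forall s : seq W, uniq s -> (3 <= size s)%N -> ~~ cycle f s.
Definition is_tree (W : finType) (f : rel W) : Prop :=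
  simple_graph f /\ (0 < #|W|)%N /\ connected_graph f /\ acyclic_graph f.

Definition corr_cover (V : finType) (e : rel V) (HV : finType) (eH : rel HV)
    (L : V -> {set HV}) : Prop :=
  (forall u v : V, u != v -> [disjoint L u & L v]) /\
  (forall x : HV, exists v : V, x \in L v) /\
  (forall (v : V) (x y : HV), x \in L v -> y \in L v -> x != y -> eH x y) /\
  (forall (u v : V), u != v -> ~~ e u v ->
     forall x y : HV, x \in L u -> y \in L v -> ~~ eH x y) /\
  (forall (u v : V), e u v ->
     forall x : HV, x \in L u -> #|[set y in L v | eH x y]| <= 1)%N.

Definition kfold_corr_cover (V : finType) (e : rel V) (HV : finType) (eH : rel HV)
    (L : V -> {set HV}) (k : nat) : Prop :=
  corr_cover e eH L /\ forall v : V, #|L v| = k.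

Definition indep_transversal (V : finType) (HV : finType) (eH : rel HV)
    (L : V -> {set HV}) (I : {set HV}) : bool :=
  [forall x in I, forall y in I, ~~ eH x y] && [forall v, #|I :&: L v| == 1%N].

Definition has_frac_packing (V : finType) (HV : finType) (eH : rel HV)
    (L : V -> {set HV}) : Prop :=
  exists p : {ffun {set HV} -> Rdefinitions.R},
    (forall I, 0 <= p I) /\
    (forall I, ~~ indep_transversal eH L I -> p I = 0) /\
    (\sum_(I : {set HV}) p I = 1) /\
    (forall (v : V) (x : HV), x \in L v ->
       \sum_(I : {set HV} | x \in I) p I = (#|L v|%:R)^-1).

Definition all_kfold_pack (V : finType) (e : rel V) (k : nat) : Prop :=
  forall (HV : finType) (eH : rel HV) (L : V -> {set HV}),
    simple_graph eH -> kfold_corr_cover e eH L k -> has_frac_packing eH L.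

Definition is_chi_c_bullet (V : finType) (e : rel V) (k : nat) : Prop :=
  (1 <= k)%N /\ all_kfold_pack e k /\
  forall j : nat, (1 <= j)%N -> (j < k)%N -> ~ all_kfold_pack e j.

(* Main.v *)
Require Import Defs.
From mathcomp Require Import all_boot all_order all_algebra.
From mathcomp Require Import Rstruct.
From mathcomp Require Import ring lra.
From Stdlib Require ClassicalEpsilon.
Set Implicit Arguments. Unset Strict Implicit. Unset Printing Implicit Defensive.

Module Aux.
Import Order.TTheory GRing.Theory Num.Theory.
Local Open Scope ring_scope.
Local Notation R := Rdefinitions.R.

Lemma forest_leaf (W : finType) (f : rel W) :
  symmetric f -> irreflexive f -> acyclic_graph f ->
  forall T : {set W}, T != set0 ->
  exists2 w, w \in T & (#|[set u in T | f w u]| <= 1)%N.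
Proof.
move=> fsym firr acyc T /set0Pn [x0 x0T].
case: (boolP [exists w in T, #|[set u in T | f w u]| <= 1]%N).
  by case/existsP=> w /andP[wT H]; exists w.
rewrite negb_exists => /forallP H2.
have H3 : forall w, w \in T -> (1 < #|[set u in T | f w u]|)%N.
  by move=> w wT; move: (H2 w); rewrite wT /= ltnNge.
suff: forall n, exists x s, [/\ uniq (x :: s), path f x s, all (mem T) (x :: s) & size s = n].
  move=> /(_ #|W|) [x [s [us _ _ ss]]].
  have := max_card (mem (x :: s)).
  by rewrite (card_uniqP us) /= ss ltnn.
elim=> [|n [x [s [us ps als ss]]]].
  by exists x0, [::]; rewrite /= x0T.
have xT : x \in T by move: als => /= /andP[].
have /card_gt1P [a [b [aN bN ab]]] := H3 x xT.
move: aN bN; rewrite !inE => /andP[aT fxa] /andP[bT fxb].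
have [z [zT fxz zy]] : exists z, [/\ z \in T, f x z & (forall y s', s = y :: s' -> z != y)].
  case: s {us ps als ss} => [|y s']; first by exists a; split => // ? ? [].
  case: (eqVneq a y) => [ay|ay]; last by exists a; split => // ? ? [<- _].
  exists b; split => // ? ? [<- _]; by rewrite -ay eq_sym.
case: (boolP (z \in x :: s)) => zin; last first.
  exists z, (x :: s); split => //=; first by rewrite zin.
  - by rewrite fsym fxz.
  - by rewrite zT.
  - by rewrite ss.
exfalso.
have zx : z != x by apply/eqP => zx; move: fxz; rewrite zx firr.
move: zin; rewrite inE (negPf zx) /= => zs.
case/splitPr: zs us ps zy => s1 s2 us ps zy.
have s1n : s1 != [::].
  case: s1 us ps zy => // _ _ /(_ z s2 erefl); by rewrite eqxx.
have cyc : cycle f (x :: rcons s1 z).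
  rewrite /= rcons_path rcons_path last_rcons (fsym z x) fxz andbT.
  by move: ps; rewrite cat_path /= => /andP[-> /andP[-> _]].
have sz : (3 <= size (x :: rcons s1 z))%N.
  by rewrite /= size_rcons; case: s1 s1n {us ps zy cyc}.
have un : uniq (x :: rcons s1 z).
  move: us; rewrite -cats1; apply: subseq_uniq; rewrite -!cat_cons.
  apply: cat_subseq; first exact: subseq_refl. by rewrite /= eqxx sub0seq.
by rewrite (negbTE (acyc _ un sz)) in cyc.
Qed.


Lemma sub_le1 (T : finType) (A A' : {set T}) (P : pred T) :
  A' \subset A -> (#|[set z in A | P z]| <= 1)%N -> (#|[set z in A' | P z]| <= 1)%N.
Proof.
move=> sA H; apply: leq_trans H; apply: subset_leq_card; apply/subsetP=> z.
by rewrite !inE => /andP[/(subsetP sA) -> ->].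
Qed.

Lemma le1_eq (T : finType) (A : {set T}) (P : pred T) x y :
  (#|[set z in A | P z]| <= 1)%N -> x \in A -> y \in A -> P x -> P y -> x = y.
Proof.
move=> /card_le1_eqP H xA yA Px Py.
by apply: H; rewrite inE ?xA ?yA.
Qed.

Lemma match_ext (T : finType) (R : rel T) (n : nat) : forall (A B : {set T}),
  #|A| = n -> #|B| = n ->
  (forall a, a \in A -> #|[set b in B | R a b]| <= 1)%N ->
  (forall b, b \in B -> #|[set a in A | R a b]| <= 1)%N ->
  exists g : T -> T, [/\ {in A &, injective g}, (forall a, a \in A -> g a \in B) &
     (forall a b, a \in A -> b \in B -> R a b -> g a = b)].
Proof.
elim: n => [|n IH] A B cA cB HA HB.
  exists id; split.
  - by move=> x y xA; move: cA => /eqP; rewrite cards_eq0 => /eqP A0; move: xA; rewrite A0 inE.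
  - by move=> x xA; move: cA => /eqP; rewrite cards_eq0 => /eqP A0; move: xA; rewrite A0 inE.
  - by move=> x y xA; move: cA => /eqP; rewrite cards_eq0 => /eqP A0; move: xA; rewrite A0 inE.
have [a [b [aA bB Hab]]] : exists a b, [/\ a \in A, b \in B &
    forall a' b', a' \in A -> b' \in B -> R a' b' -> (a' == a) = (b' == b)].
  case: (boolP [exists a in A, exists b in B, R a b]).
    case/exists_inP=> a aA /exists_inP [b bB Rab]; exists a, b; split=> // a' b' a'A b'B Ra'b'.
    case: (eqVneq a' a) => [ea|na].
      by rewrite ea in Ra'b'; rewrite (le1_eq (HA a aA) b'B bB Ra'b' Rab) eqxx.
    case: (eqVneq b' b) => [eb|//].
    by rewrite eb in Ra'b'; move: na; rewrite (le1_eq (P := R^~ b) (HB b bB) a'A aA Ra'b' Rab) eqxx.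
  rewrite negb_exists_in => /forall_inP H0.
  have /card_gt0P [a aA] : (0 < #|A|)%N by rewrite cA.
  have /card_gt0P [b bB] : (0 < #|B|)%N by rewrite cB.
  exists a, b; split=> // a' b' a'A b'B R'.
  by move: (H0 a' a'A); rewrite negb_exists_in => /forall_inP /(_ b' b'B); rewrite R'.
have cA' : #|A :\ a| = n by move: cA; rewrite (cardsD1 a) aA => -[].
have cB' : #|B :\ b| = n by move: cB; rewrite (cardsD1 b) bB => -[].
have [g' [g'inj g'B g'R]] := IH _ _ cA' cB'
  (fun a' a'A => sub_le1 (subD1set B b) (HA a' (subsetP (subD1set A a) _ a'A)))
  (fun b' b'B => sub_le1 (P := R^~ b') (subD1set A a) (HB b' (subsetP (subD1set B b) _ b'B))).
exists (fun x => if x == a then b else g' x); split.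
- move=> x y xA yA /=.
  case: (eqVneq x a) => [->|xa]; case: (eqVneq y a) => [->|ya] //.
  + by move=> E; have := g'B y; rewrite !inE ya yA -E eqxx => /(_ isT).
  + by move=> E; have := g'B x; rewrite !inE xa xA E eqxx => /(_ isT).
  + by apply: g'inj; rewrite !inE ?xa ?ya.
- move=> x xA /=; case: (eqVneq x a) => [_|xa] //.
  by have := g'B x; rewrite !inE xa xA => /(_ isT) /andP[].
- move=> x y xA yB Rxy /=; have := Hab x y xA yB Rxy.
  case: (eqVneq x a) => [_ /esym/eqP //|xa yb].
  by apply: g'R; rewrite // !inE ?xa ?xA ?yB // -yb.
Qed.


Lemma push (A B : finType) (h : A -> B) (F : A -> R) (P : pred B) :
  \sum_(b | P b) [ffun b => \sum_(a | h a == b) F a] b = \sum_(a | P (h a)) F a.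
Proof.
under eq_bigr do rewrite ffunE.
rewrite (exchange_big_dep (fun a => P (h a))) /=; last by move=> b a Pb /eqP ->.
apply: eq_bigr => a Pa; rewrite (big_pred1 (h a)) // => b /=.
by case: (eqVneq (h a) b) => [<-|]; rewrite ?Pa ?andbF // eq_sym => /negPf ->.
Qed.

Lemma push_supp (A B : finType) (h : A -> B) (F : A -> R) b :
  [ffun b => \sum_(a | h a == b) F a] b != 0 -> exists2 a, h a = b & F a != 0.
Proof.
rewrite ffunE => H; case: (boolP [exists a, (h a == b) && (F a != 0)]).
  by case/existsP => a /andP[/eqP ? ?]; exists a.
rewrite negb_exists => /forallP H0; move: H; rewrite big1 ?eqxx // => a /eqP hab.
by move: (H0 a); rewrite hab eqxx /= negbK => /eqP.
Qed.



Definition good_pack (V HV : finType) (eH : rel HV) (L : V -> {set HV}) (k : nat)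
   (Q : {ffun {set HV} -> R}) :=
  [/\ forall J, 0 <= Q J, \sum_(J : {set HV}) Q J = 1,
    forall J, Q J != 0 -> [/\ J \subset \bigcup_v L v,
        forall x y, x \in J -> y \in J -> ~~ eH x y & forall v, #|J :&: L v| = 1%N]
   & forall v x, x \in L v -> \sum_(J : {set HV} | x \in J) Q J = (k%:R)^-1].

Lemma pack_sub (V : finType) (e : rel V) (k : nat) (HV : finType) (eH : rel HV)
    (L : V -> {set HV}) :
  all_kfold_pack e k -> simple_graph eH ->
  (forall u v, u != v -> [disjoint L u & L v]) ->
  (forall v x y, x \in L v -> y \in L v -> x != y -> eH x y) ->
  (forall u v, u != v -> ~~ e u v -> forall x y, x \in L u -> y \in L v -> ~~ eH x y) ->
  (forall u v, e u v -> forall x, x \in L u -> #|[set y in L v | eH x y]| <= 1)%N ->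
  (forall v, #|L v| = k) ->
  exists Q, good_pack eH L k Q.
Proof.
move=> Hpack [eHsym eHirr] Hdis Hcl Hna Hmat Hcard.
pose U := \bigcup_v L v.
pose S := {x : HV | x \in U}.
pose L2 := fun v => [set y : S | val y \in L v].
pose eH2 := fun a b : S => eH (val a) (val b).
have cL2 : forall v, #|L2 v| = k.
  move=> v; rewrite -(Hcard v) -(card_imset _ val_inj); apply: eq_card => x.
  apply/imsetP/idP => [[y]|xL]; first by rewrite inE => ? ->.
  have xU : x \in U by apply/bigcupP; exists v.
  by exists (exist _ x xU); rewrite ?inE.
have sg2 : simple_graph eH2 by split=> [a b|a]; rewrite /eH2 ?eHirr // eHsym.
have cov : kfold_corr_cover e eH2 L2 k.
  split=> //; split; [|split; [|split; [|split]]].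
  - move=> u v uv; rewrite -setI_eq0; apply/eqP/setP => y; rewrite !inE.
    apply/negbTE/negP => /andP[H1 H2].
    by rewrite (disjointFr (Hdis u v uv) H1) in H2.
  - by move=> y; have /bigcupP [v _ yv] := valP y; exists v; rewrite inE.
  - move=> v x y; rewrite !inE => xv yv xy; apply: Hcl xv yv _.
    by apply: contra xy => /eqP /val_inj ->.
  - by move=> u v uv nuv x y; rewrite !inE; apply: Hna.
  - move=> u v euv x; rewrite inE => xu; apply/card_le1_eqP => y1 y2.
    rewrite !inE => /andP[y1v e1] /andP[y2v e2]; apply: val_inj.
    exact: (le1_eq (Hmat u v euv _ xu) y2v y1v e2 e1).
have [p2 [p2ge0 [p2supp [p2sum p2marg]]]] := Hpack _ _ _ sg2 cov.
pose h := fun J2 : {set S} => [set val y | y in J2].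
exists [ffun J => \sum_(J2 | h J2 == J) p2 J2]; split.
- by move=> J; rewrite ffunE; apply: sumr_ge0.
- by rewrite (push h p2 predT).
- move=> J /push_supp [J2 <- pJ2].
  have /andP [/forallP ind /forallP tr] : indep_transversal eH2 L2 J2.
    by apply: contraR pJ2 => /p2supp ->.
  split.
  + by apply/subsetP => x /imsetP [y _ ->]; exact: (valP y).
  + move=> x y /imsetP [a aJ ->] /imsetP [b bJ ->].
    by move: (ind a); rewrite aJ /= => /forallP /(_ b); rewrite bJ.
  + move=> v; move: (tr v) => /eqP <-; rewrite -(card_imset _ val_inj).
    apply: eq_card => x; rewrite !inE; apply/andP/imsetP.
      by case=> /imsetP [y yJ ->] yv; exists y; rewrite // !inE yJ.
    by case=> y; rewrite !inE => /andP[yJ yv] ->; split=> //; apply: imset_f.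
- move=> v x xv; rewrite (push h p2 (fun J => x \in J)).
  have xU : x \in U by apply/bigcupP; exists v.
  rewrite -(cL2 v) -(p2marg v (exist _ x xU)); last by rewrite inE.
  apply: eq_bigl => J2; apply/imsetP/idP => [[y yJ /= E]|xJ]; last by exists (exist _ x xU).
  by have -> : exist _ x xU = y by apply: val_inj.
Qed.

Section Step.
Variables (V W : finType) (e : rel V) (f : rel W) (k : nat).
Hypothesis esg : simple_graph e.
Hypothesis fsg : simple_graph f.
Hypothesis k1 : (1 <= k)%N.
Hypothesis Hpack : all_kfold_pack e k.
Variables (HV : finType) (eH : rel HV) (L : V * W -> {set HV}).
Hypothesis eHsg : simple_graph eH.
Hypothesis cov : kfold_corr_cover (cart_prod e f) eH L k.+1.

Definition indepT (T : {set W}) (I : {set HV}) :=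
  (forall x y, x \in I -> y \in I -> ~~ eH x y) /\
  (forall v w, #|I :&: L (v, w)| = (w \in T)).

Definition goodT T (p : {ffun {set HV} -> R}) :=
  [/\ forall I, 0 <= p I, \sum_(I : {set HV}) p I = 1, forall I, p I != 0 -> indepT T I &
      forall v w x, w \in T -> x \in L (v,w) ->
        \sum_(I : {set HV} | x \in I) p I = (k.+1%:R)^-1].

Lemma goodT0 : goodT set0 [ffun I => (I == set0)%:R].
Proof.
split.
- by move=> I; rewrite ffunE ler0n.
- rewrite (bigD1 set0) //= ffunE eqxx big1 ?addr0 // => I /negPf.
  by rewrite ffunE => ->.
- move=> I; rewrite ffunE; case: (eqVneq I set0) => [I0 _|]; last by rewrite eqxx.
  split.
    by move=> x y; rewrite I0 in_set0.
  by move=> v w; rewrite I0 set0I cards0 in_set0.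
- by move=> v w x; rewrite in_set0.
Qed.


Lemma frac_id : ((1 - (k.+1%:R : R)^-1) / k%:R) = (k.+1%:R)^-1.
Proof.
have k0' : (k%:R : R) != 0 by rewrite pnatr_eq0 -lt0n.
rewrite -addn1 natrD; field; by rewrite k0' andbT natr1 pnatr_eq0.
Qed.

Lemma split3 (G : ({set HV} * 'I_k.+1) * {set HV} -> R) :
  \sum_a G a = \sum_(I : {set HV}) \sum_(j < k.+1) \sum_(J : {set HV}) G ((I, j), J).
Proof.
rewrite pair_bigA pair_bigA; apply: eq_bigr => [[[I j] J]] _ //.
Qed.

Lemma assemble (T' : {set W}) (w : W) (p : {ffun {set HV} -> R}) (del : {set HV} -> 'I_k.+1 -> V -> HV) :
  w \notin T' -> goodT T' p ->
  (forall I j v, p I != 0 -> del I j v \in L (v,w)) ->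
  (forall v x, x \in L (v,w) ->
     \sum_(I : {set HV}) \sum_(j < k.+1) (p I / k.+1%:R) * (del I j v == x)%:R = (k.+1%:R)^-1) ->
  (forall I j v u y x, p I != 0 -> u \in T' -> f w u -> y \in I -> y \in L (v,u) ->
      x \in L (v,w) -> eH y x -> x = del I j v) ->
  exists p', goodT (w |: T') p'.
Proof.
move=> wT' [pge0 psum psupp pmarg] D1 D2 D3.
case: cov => [[Hdis [Hcov [Hcl [Hna Hmat]]]] Hcard].
case: eHsg => eHsym eHirr; case: fsg => fsym firr; case: esg => esym eirr.
have hdisj : forall a b y, a != b -> y \in L a -> y \in L b -> False.
  by move=> a b y ab ya yb; rewrite (disjointFr (Hdis a b ab) ya) in yb.
pose L' I j v := L (v,w) :\ del I j v.
have L'sub : forall I j v, L' I j v \subset L (v,w) by move=> *; apply: subD1set.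
have HQ : forall a : {set HV} * 'I_k.+1, exists Q : {ffun {set HV} -> R},
    p a.1 != 0 -> good_pack eH (L' a.1 a.2) k Q.
  case=> I j /=; case: (eqVneq (p I) 0) => [_|pI]; first by exists 0.
  suff [Q HQ] : exists Q, good_pack eH (L' I j) k Q by exists Q.
  apply: (pack_sub Hpack) => //.
  - move=> v1 v2 v12; apply: (disjointWl (L'sub I j v1)); rewrite disjoint_sym.
    apply: (disjointWl (L'sub I j v2)); rewrite disjoint_sym; apply: Hdis.
    by apply: contra v12 => /eqP [->].
  - move=> v x y xv yv; apply: (Hcl (v,w)); by [apply: (subsetP (L'sub I j v)) | ].
  - move=> v1 v2 v12 ne12 x y xv yv; apply: (Hna (v1,w) (v2,w)).
    + by apply: contra v12 => /eqP [->].
    + by rewrite /cart_prod /= (negPf v12) /= eqxx /=.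
    + exact: (subsetP (L'sub I j v1) _ xv).
    + exact: (subsetP (L'sub I j v2) _ yv).
  - move=> v1 v2 e12 x xv; apply: (sub_le1 (L'sub I j v2)).
    apply: (Hmat (v1,w) (v2,w)); first by rewrite /cart_prod /= eqxx e12 orbT.
    exact: (subsetP (L'sub I j v1) _ xv).
  - move=> v; have := cardsD1 (del I j v) (L (v,w)).
    by rewrite D1 // Hcard add1n => -[].
have [Qf HQf] := fin_all_exists HQ.
pose F := fun a : ({set HV} * 'I_k.+1) * {set HV} => p a.1.1 / k.+1%:R * Qf a.1 a.2.
pose h := fun a : ({set HV} * 'I_k.+1) * {set HV} => a.1.1 :|: a.2.
have Kn0 : (k.+1%:R : R) != 0 by rewrite pnatr_eq0.
have Fnz : forall I j J, F ((I,j),J) != 0 -> p I != 0 /\ Qf (I,j) J != 0.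
  move=> I j J; rewrite /F /= !mulf_eq0 negb_or => /andP[/norP [pI _] QJ]; by [].
have F0 : forall I j J, p I = 0 -> F ((I,j),J) = 0.
  by move=> I j J pI; rewrite /F /= pI !mul0r.
have Fge0 : forall a, 0 <= F a.
  case=> [[I j] J]; case: (eqVneq (p I) 0) => [pI|pI]; first by rewrite F0.
  case: (HQf (I,j) pI) => Q0 _ _ _.
  by rewrite /F /= mulr_ge0 // mulr_ge0 // invr_ge0 ler0n.
have inner : forall I j, \sum_(J : {set HV}) F ((I,j),J) = p I / k.+1%:R.
  move=> I j; rewrite /F /= -mulr_sumr; case: (eqVneq (p I) 0) => [->|pI].
    by rewrite !mul0r.
  by case: (HQf (I,j) pI) => _ -> _ _; rewrite mulr1.
have inner2 : forall I, \sum_(j < k.+1) p I / k.+1%:R = p I.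
  by move=> I; rewrite sumr_const card_ord -[LHS]mulr_natr divfK.
exists [ffun I' => \sum_(a | h a == I') F a]; split.
- by move=> I'; rewrite ffunE; apply: sumr_ge0.
- rewrite (push h F (fun _ => true)) split3.
  under eq_bigr do under eq_bigr do rewrite inner.
  by under eq_bigr do rewrite inner2.
- move=> I' /push_supp [[[I j] J] <- Fa]; have [pI QJ] := Fnz _ _ _ Fa.
  case: (HQf (I,j) pI) => /= _ _ /(_ J QJ) [Jsub Jind Jcard] _.
  have [Iind Icard] := psupp I pI.
  have inJ : forall y, y \in J -> exists v2, y \in L' I j v2.
    by move=> y yJ; have [v2 _ yv2] := bigcupP (subsetP Jsub y yJ); exists v2.
  have cross : forall x y, x \in I -> y \in J -> ~~ eH x y.
    move=> x y xI yJ; apply/negP => exy.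
    have [v2 yv2] := inJ y yJ.
    have [[v1 w1] xv1] := Hcov x.
    have w1T : w1 \in T'.
      have : (0 < #|I :&: L (v1,w1)|)%N by apply/card_gt0P; exists x; rewrite inE xI.
      by rewrite Icard lt0b.
    have w1w : w1 != w by apply: contraNneq wT' => <-.
    have yw : y \in L (v2, w) := subsetP (L'sub I j v2) _ yv2.
    have cp : cart_prod e f (v1,w1) (v2,w).
      apply: contraT => ncp.
      have uv : (v1,w1) != (v2,w) by apply: contra w1w => /eqP [_ ->].
      by rewrite (negPf (Hna _ _ uv ncp x y xv1 yw)) in exy.
    move: cp; rewrite /cart_prod /= (negPf w1w) /= orbF => /andP[/eqP v12 fw1w].
    subst v2.
    have fww1 : f w w1 by rewrite fsym.
    have yd := D3 I j v1 w1 x y pI w1T fww1 xI xv1 yw exy.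
    by move: yv2; rewrite /L' !inE yd eqxx.
  split.
    move=> x y; rewrite !inE => /orP[xI|xJ] /orP[yI|yJ].
    - exact: Iind.
    - exact: cross.
    - by rewrite eHsym; apply: cross.
    - exact: Jind.
  move=> v w0; case: (eqVneq w0 w) => [->|w0w].
    rewrite setU11 /= -(Jcard v); apply: eq_card => y; rewrite /L' !inE.
    apply/idP/idP => [/andP[/orP[yI|yJ] yL]|/andP[yJ /andP[_ yL]]]; last by rewrite yJ orbT yL.
      have : (0 < #|I :&: L (v,w)|)%N by apply/card_gt0P; exists y; rewrite inE yI.
      by rewrite Icard (negPf wT').
    have [v2 yv2] := inJ y yJ.
    case: (eqVneq v2 v) => [e2|n2]; first by move: yv2; rewrite e2 /L' !inE yJ => ->.
    exfalso; apply: (hdisj (v2,w) (v,w) y); last by [].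
      by apply: contra n2 => /eqP [->].
    exact: (subsetP (L'sub I j v2) _ yv2).
  rewrite in_setU1 (negPf w0w) /= -(Icard v w0); apply: eq_card => y; rewrite !inE.
  apply/idP/idP => [/andP[/orP[yI|yJ] yL]|/andP[yI yL]]; [by rewrite yI yL| |by rewrite yI yL].
  have [v2 yv2] := inJ y yJ.
  exfalso; apply: (hdisj (v2,w) (v,w0) y); last by [].
    by apply: contra w0w => /eqP [_ ->].
  exact: (subsetP (L'sub I j v2) _ yv2).
- move=> v w0 x; rewrite in_setU1 => w0T xL.
  rewrite (push h F (fun I' => x \in I')) big_mkcond split3 /=.
  case/orP: w0T => [/eqP E|w0T].
    subst w0.
    have E1 : forall I j, \sum_(J : {set HV}) (if x \in I :|: J then F ((I,j),J) else 0)
        = p I / k.+1%:R * ((x != del I j v)%:R / k%:R).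
      move=> I j; case: (eqVneq (p I) 0) => [pI|pI].
        rewrite pI !mul0r big1 // => J _; rewrite F0 //; by case: ifP.
      have xI : x \notin I.
        apply/negP => xI; have [_ Icard] := psupp I pI.
        have : (0 < #|I :&: L (v,w)|)%N by apply/card_gt0P; exists x; rewrite inE xI.
        by rewrite Icard (negPf wT').
      case: (HQf (I,j) pI) => /= _ _ Qsupp Qmarg.
      rewrite /F /=.
      under eq_bigr do rewrite in_setU (negPf xI) /=.
      rewrite -big_mkcond -mulr_sumr; congr (_ * _).
      case: (eqVneq x (del I j v)) => [xd|xd] /=.
        rewrite mul0r big1 // => J xJ; apply/eqP; apply: contraT => QJ.
        have [_ _ Jcard] := Qsupp J QJ.
        have [v2 _ xv2] := bigcupP (subsetP (let: And3 s _ _ := Qsupp J QJ in s) x xJ).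
        case: (eqVneq v2 v) => [e2|n2]; first by move: xv2; rewrite e2 !inE xd eqxx.
        exfalso; apply: (hdisj (v2,w) (v,w) x); last by [].
          by apply: contra n2 => /eqP [->].
        exact: (subsetP (L'sub I j v2) _ xv2).
      by rewrite mul1r (Qmarg v x) // !inE xd xL.
    under eq_bigr do under eq_bigr do rewrite E1.
    have E2 : forall I j, p I / k.+1%:R * ((x != del I j v)%:R / k%:R) =
        (p I / k.+1%:R - p I / k.+1%:R * (del I j v == x)%:R) / k%:R.
      by move=> I j; rewrite eq_sym; case: (del I j v == x) => /=; ring.
    under eq_bigr do under eq_bigr do rewrite E2.
    under eq_bigr do rewrite -mulr_suml sumrB inner2.
    by rewrite -mulr_suml sumrB psum D2 // frac_id.
  have w0w : w0 != w by apply: contraNneq wT' => <-.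
  have E1 : forall I, \sum_(j < k.+1) \sum_(J : {set HV}) (if x \in I :|: J then F ((I,j),J) else 0)
        = if x \in I then p I else 0.
    move=> I; case: (eqVneq (p I) 0) => [pI|pI].
      rewrite pI big1; first by case: ifP.
      by move=> j _; rewrite big1 // => J _; rewrite F0 //; case: ifP.
    transitivity (\sum_(j < k.+1) \sum_(J : {set HV}) (if x \in I then F ((I,j),J) else 0)).
      apply: eq_bigr => j _; apply: eq_bigr => J _.
      case: (eqVneq (F ((I,j),J)) 0) => [->|Fa]; first by case: ifP; case: ifP.
      have [_ QJ] := Fnz _ _ _ Fa.
      case: (HQf (I,j) pI) => /= _ _ /(_ J QJ) [Jsub _ _] _.
      rewrite in_setU; case xJ: (x \in J); last by rewrite orbF.
      have [v2 _ xv2] := bigcupP (subsetP Jsub x xJ).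
      exfalso; apply: (hdisj (v2,w) (v,w0) x); last by [].
        by apply: contra w0w => /eqP [_ ->].
      exact: (subsetP (L'sub I j v2) _ xv2).
    case: ifP => xI; last by rewrite big1 // => j _; rewrite big1.
    rewrite -inner2; apply: eq_bigr => j _; exact: inner.
  under eq_bigr do rewrite E1.
  by rewrite -big_mkcond /= (pmarg v w0 x).
Qed.

Lemma cnt_nth (x0 x : HV) (s : seq HV) :
  uniq s -> x \in s -> size s = k.+1 ->
  \sum_(j < k.+1) ((nth x0 s j == x)%:R : R) = 1.
Proof.
move=> us xs ss.
have ix : (index x s < k.+1)%N by rewrite -ss index_mem.
rewrite (bigD1 (Ordinal ix)) //= nth_index // eqxx big1 ?addr0 // => j jne.
suff -> : (nth x0 s j == x) = false by [].
apply/negbTE; apply: contra jne => /eqP E; apply/eqP/val_inj => /=.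
by rewrite -E index_uniq // ss.
Qed.

Lemma inj_onto (g : HV -> HV) (A B : {set HV}) :
  {in A &, injective g} -> (forall a, a \in A -> g a \in B) -> #|A| = #|B| ->
  forall x, x \in B -> exists2 a, a \in A & g a = x.
Proof.
move=> gi gB cAB x xB.
have sub : g @: A \subset B by apply/subsetP => y /imsetP [a aA ->]; exact: gB.
have : g @: A == B by rewrite eqEcard sub (card_in_imset gi) cAB leqnn.
by move=> /eqP E; move: xB; rewrite -E => /imsetP [a aA ->]; exists a.
Qed.

Lemma step (T' : {set W}) (w : W) (p : {ffun {set HV} -> R}) :
  w \notin T' -> goodT T' p -> (#|[set u in T' | f w u]| <= 1)%N ->
  exists p', goodT (w |: T') p'.
Proof.
move=> wT' gp nb.
have gp' := gp; case: gp' => [pge0 psum psupp pmarg].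
have cov' := cov; case: cov' => [[Hdis [Hcov [Hcl [Hna Hmat]]]] Hcard].
case: eHsg => eHsym eHirr; case: fsg => fsym firr.
case: (pickP (@predT HV)) => [x0 _|H0]; last first.
  have nV : V -> False.
    move=> v; have : (0 < #|L (v,w)|)%N by rewrite Hcard.
    by case/card_gt0P => y _; move: (H0 y).
  exists p; split=> //.
  - move=> I pI; have [Iind _] := psupp I pI; split=> // v; by case: (nV v).
case: (boolP [exists u in T', f w u]) => [/exists_inP [u uT fwu]|none]; last first.
  apply: (assemble (del := fun I j v => nth x0 (enum (L (v,w))) j)) => //.
  - by move=> I j v _; rewrite -mem_enum mem_nth // -cardE Hcard.
  - move=> v x xL.
    under eq_bigr do rewrite -mulr_sumr cnt_nth ?enum_uniq ?mem_enum -?cardE ?Hcard // mulr1.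
    by rewrite -mulr_suml psum mul1r.
  - move=> I j v u y x _ uT fwu; exfalso; move/exists_inP: none; apply.
    by exists u.
have uniqu : forall u', u' \in T' -> f w u' -> u' = u.
  by move=> u' u'T fwu'; apply: (le1_eq nb u'T uT fwu' fwu).
have Hg : forall v, exists g : HV -> HV, [/\ {in L (v,u) &, injective g},
    (forall a, a \in L (v,u) -> g a \in L (v,w)) &
    (forall a b, a \in L (v,u) -> b \in L (v,w) -> eH a b -> g a = b)].
  move=> v; apply: (match_ext (n := k.+1)); rewrite ?Hcard //.
  - move=> a aA; apply: (Hmat (v,u) (v,w)) => //.
    by rewrite /cart_prod /= eqxx fsym fwu.
  - move=> b bB; apply/card_le1_eqP => a1 a2; rewrite !inE => /andP[a1A e1] /andP[a2A e2].
    have cp : cart_prod e f (v,w) (v,u) by rewrite /cart_prod /= eqxx fwu.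
    by apply: (le1_eq (Hmat _ _ cp b bB) a2A a1A); rewrite eHsym.
have [g Hgv] := fin_all_exists Hg.
pose c I v := odflt x0 [pick y in I :&: L (v,u)].
have cI : forall I v, p I != 0 -> c I v \in I :&: L (v,u).
  move=> I v pI; have [_ Icard] := psupp I pI.
  rewrite /c; case: pickP => [y //|none0].
  have : (0 < #|I :&: L (v,u)|)%N by rewrite Icard uT.
  by case/card_gt0P => y; rewrite none0.
have uniqI : forall I v y, p I != 0 -> y \in I -> y \in L (v,u) -> y = c I v.
  move=> I v y pI yI yL; have [_ Icard] := psupp I pI.
  have : (#|I :&: L (v,u)| <= 1)%N by rewrite Icard uT.
  move/card_le1_eqP; apply; last by rewrite inE yI yL.
  exact: cI.
apply: (assemble (del := fun I j v => g v (c I v))) => //.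
- move=> I j v pI; case: (Hgv v) => _ gB _; apply: gB.
  by have := cI I v pI; rewrite inE => /andP[].
- move=> v x xL; case: (Hgv v) => ginj gB gR.
  have [a aA gax] := inj_onto ginj gB (etrans (Hcard _) (esym (Hcard _))) xL.
  transitivity (\sum_(I : {set HV}) if a \in I then p I else 0); last first.
    by rewrite -big_mkcond /= (pmarg v u a uT aA).
  apply: eq_bigr => I _; rewrite -mulr_sumr sumr_const card_ord.
  case: (eqVneq (p I) 0) => [->|pI]; first by rewrite !mul0r; case: ifP.
  have cIv := cI I v pI; move: cIv; rewrite inE => /andP[cII cL].
  case: ifP => aI.
    rewrite -(uniqI I v a pI aI aA) gax eqxx /=.
    by rewrite divfK // pnatr_eq0.
  suff -> : (g v (c I v) == x) = false by rewrite /= mul0rn mulr0.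
  apply/negbTE; apply: contraFN aI => /eqP gcx.
  by rewrite -(ginj _ _ cL aA (etrans gcx (esym gax))).
- move=> I j v u' y x pI u'T fwu' yI yL xL eyx.
  have u'u := uniqu u' u'T fwu'; subst u'.
  case: (Hgv v) => _ _ gR.
  by rewrite -(uniqI I v y pI yI yL) (gR y x yL xL eyx).
Qed.

Hypothesis facyc : acyclic_graph f.

Lemma allgood : forall n (T : {set W}), #|T| = n -> exists p, goodT T p.
Proof.
elim=> [|n IH] T cT.
  by rewrite (cards0_eq cT); exists [ffun I => (I == set0)%:R]; exact: goodT0.
have Tn0 : T != set0 by apply/set0Pn; apply/card_gt0P; rewrite cT.
have fsg' := fsg; case: fsg' => fsym firr.
have [w wT nb] := forest_leaf fsym firr facyc Tn0.
have cT' : #|T :\ w| = n by move: cT; rewrite (cardsD1 w) wT => -[].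
have [p gp] := IH _ cT'.
have wT' : w \notin T :\ w by rewrite setD11.
have [p' gp'] := step wT' gp (sub_le1 (subD1set T w) nb).
by exists p'; rewrite -(setD1K wT).
Qed.

Lemma pack_final : has_frac_packing eH L.
Proof.
have [p [pge0 psum psupp pmarg]] := allgood (erefl #|[set: W]|).
have cov' := cov; case: cov' => [_ Hcard].
exists p; split=> //; split.
  move=> I; apply: contraNeq => pI; have [Iind Icard] := psupp I pI.
  apply/andP; split.
    by apply/forall_inP => x xI; apply/forall_inP => y yI; exact: Iind.
  by apply/forallP => -[v w]; rewrite Icard in_setT.
split=> // -[v w] x xL; rewrite Hcard; exact: (pmarg v w x (in_setT w) xL).
Qed.

End Step.

Lemma prod_pack (V W : finType) (e : rel V) (f : rel W) (k : nat) :
  simple_graph e -> simple_graph f -> acyclic_graph f -> (1 <= k)%N ->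
  all_kfold_pack e k -> all_kfold_pack (cart_prod e f) k.+1.
Proof.
move=> esg fsg facyc k1 Hpack HV eH L eHsg cv.
exact: (pack_final esg fsg k1 Hpack eHsg cv facyc).
Qed.

End Aux.

Definition pb (P : Prop) : bool :=
  if ClassicalEpsilon.excluded_middle_informative P then true else false.
Lemma pbP P : reflect P (pb P).
Proof.
rewrite /pb; case: ClassicalEpsilon.excluded_middle_informative => H;
  [exact: ReflectT | exact: ReflectF].
Qed.

Theorem mainTheorem12 (V W : finType) (e : rel V) (f : rel W) :
  simple_graph e -> is_tree f ->
  forall k : nat, is_chi_c_bullet e k ->
  exists k' : nat, is_chi_c_bullet (cart_prod e f) k' /\ (k' <= k + 1)%N.
Proof.
move=> esg [fsg [_ [_ facyc]]] k [k1 [Hpack _]].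
have P1 : all_kfold_pack (cart_prod e f) k.+1 := Aux.prod_pack esg fsg facyc k1 Hpack.
pose P := fun n => (1 <= n)%N && pb (all_kfold_pack (cart_prod e f) n).
have exP : exists n, P n by exists k.+1; rewrite /P /=; apply/pbP.
case: (ex_minnP exP) => m /andP[m1 /pbP Pm] mmin.
exists m; split; last by rewrite addn1; apply: mmin; rewrite /P /=; apply/pbP.
split=> //; split=> // j j1 jm Pj.
have := mmin j; rewrite /P j1 /= => /(_ (introT (pbP _) Pj)); by rewrite leqNgt jm.
Qed.
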